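(* Let $\mathbf{A}=(A_1,\ldots,A_n)$ be a POVM on $\mathbb{C}^2$. Then $\mathbf{A}$ is projective-simulable if and only if the pair $\{\mathbf{A},\bar{\mathbf{A}}\}$ is jointly measurable, where $\bar{\mathbf{A}}=(\bar A_1,\ldots,\bar A_n)$ with $\bar A_i=\mathrm{Tr}(A_i)\mathbb{I}-A_i$.
   Context: A POVM on $\mathbb{C}^d$ with $n$ outcomes is a tuple $\mathbf{A}=(A_1,\ldots,A_n)$ of positive semidefinite operators with $\sum_a A_a=\mathbb{I}$ (some effects may be zero); it is projective if all effects are projectors. Given a set $\mathcal{B}=\{\mathbf{B}^{(j)}\}_j$ of POVMs, a POVM $\mathbf{A}$ with $n$ outcomes is $\mathcal{B}$-simulable if there are a probability distribution $p(j)$ over (finitely many) elements of $\mathcal{B}$ and conditional probability distributions $q(i|j,i')$ (over $i\in\{1,\ldots,n\}$, for each $j$ and each outcome $i'$ of $\mathbf{B}^{(j)}$) such that $A_i=\sum_j p(j)\sum_{i'}q(i|j,i')B^{(j)}_{i'}$ for all $i$. $\mathbf{A}$ is projective-simulable if it is $\mathcal{B}$-simulable with $\mathcal{B}$ the set of all projective POVMs on $\mathbb{C}^d$. For a qubit operator $A=a\mathbb{I}+\vec v\cdot\vec\sigma$ ($\vec\sigma$ the Pauli matrices), the antipodal operator is $\bar A=a\mathbb{I}-\vec v\cdot\vec\sigma=\mathrm{Tr}(A)\mathbb{I}-A$. A pair of POVMs $\mathbf{A}$, $\mathbf{A}'$ is jointly measurable if there is a POVM $(M_{ab})$ with $\sum_b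 M_{ab}=A_a$ and $\sum_a M_{ab}=A'_b$ for all $a,b$. *)

(* Defs.v *)
(* Complex scalars: an arbitrary numClosedFieldType C
   (e.g. algC); the order on C is the usual partial order, so 0 <= x means
   x is real and nonnegative. *)
From HB Require Import structures.
From mathcomp Require Import all_boot all_order all_algebra.
Set Implicit Arguments. Unset Strict Implicit. Unset Printing Implicit Defensive.
Import Order.TTheory GRing.Theory Num.Theory.
Local Open Scope ring_scope.

Section QDefs.
Variable C : numClosedFieldType.

Definition adjmx (m n : nat) (A : 'M[C]_(m, n)) : 'M[C]_(n, m) := (map_mx Num.conj A)^T.

Definition psd (d : nat) (A : 'M[C]_d) : Prop :=
  adjmx A = A /\ forall v : 'cV[C]_d, 0 <= (adjmx v *m A *m v) 0 0.

Definition is_povm (d n : nat) (A : 'I_n -> 'M[C]_d) : Prop :=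
  (forall i, psd (A i)) /\ \sum_(i < n) A i = 1%:M.

Definition is_projective_povm (d n : nat) (A : 'I_n -> 'M[C]_d) : Prop :=
  is_povm A /\ forall i, A i *m A i = A i.

(* B-simulability with B = all projective POVMs on C^d: a finite family
   (indexed by 'I_m) of projective POVMs B j with k j outcomes, a probability
   distribution p on the family, and conditional distributions q j i' i. *)
Definition proj_simulable (d n : nat) (A : 'I_n -> 'M[C]_d) : Prop :=
  exists (m : nat) (k : 'I_m -> nat)
         (B : forall j : 'I_m, 'I_(k j) -> 'M[C]_d)
         (p : 'I_m -> C)
         (q : forall j : 'I_m, 'I_(k j) -> 'I_n -> C),
    (forall j, is_projective_povm (B j)) /\
    (forall j, 0 <= p j) /\ \sum_(j < m) p j = 1 /\
    (forall j i' i, 0 <= q j i' i) /\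
    (forall j i', \sum_(i < n) q j i' i = 1) /\
    (forall i, A i = \sum_(j < m) p j *: \sum_(i' < k j) q j i' i *: B j i').

Definition jointly_measurable (d n n' : nat)
    (A : 'I_n -> 'M[C]_d) (A' : 'I_n' -> 'M[C]_d) : Prop :=
  exists M : 'I_n -> 'I_n' -> 'M[C]_d,
    (forall a b, psd (M a b)) /\
    \sum_(a < n) \sum_(b < n') M a b = 1%:M /\
    (forall a, \sum_(b < n') M a b = A a) /\
    (forall b, \sum_(a < n) M a b = A' b).

Definition antipodal (d : nat) (A : 'M[C]_d) : 'M[C]_d := (\tr A)%:M - A.

End QDefs.

(* Main.v *)
Require Import Defs.
From HB Require Import structures.
From mathcomp Require Import all_boot all_order all_algebra.
From mathcomp Require Import ring.
Import Order.TTheory GRing.Theory Num.Theory.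
Local Open Scope ring_scope.

Lemma big_ord2 (V : nmodType) (F : 'I_2 -> V) :
  \sum_(i < 2) F i = F 0 + F 1.
Proof. rewrite big_ord_recl big_ord1; congr (_ + F _); exact: val_inj. Qed.

Definition mk2 {C : numClosedFieldType} (x y z w : C) : 'M[C]_2 :=
  \matrix_(i < 2, j < 2) if (i == 0 :> nat) then (if (j == 0 :> nat) then x else y)
                        else (if (j == 0 :> nat) then z else w).

Lemma mk2E (C : numClosedFieldType) (X : 'M[C]_2) :
  X = mk2 (X 0 0) (X 0 1) (X 1 0) (X 1 1).
Proof.
apply/matrixP => i j; rewrite mxE.
case: i => [[|[|i]]] Hi //=; case: j => [[|[|j]]] Hj //=; congr (X _ _); exact: val_inj.
Qed.

Lemma mk2_inj (C : numClosedFieldType) (x y z w x' y' z' w' : C) :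
  x = x' -> y = y' -> z = z' -> w = w' -> mk2 x y z w = mk2 x' y' z' w'.
Proof. by move=> -> -> -> ->. Qed.

Lemma mk2_mul (C : numClosedFieldType) (x y z w x' y' z' w' : C) :
  mk2 x y z w *m mk2 x' y' z' w' =
  mk2 (x * x' + y * z') (x * y' + y * w') (z * x' + w * z') (z * y' + w * w').
Proof.
apply/matrixP => i j; rewrite !mxE big_ord2 !mxE /=.
by case: i => [[|[|i]]] Hi //=; case: j => [[|[|j]]] Hj.
Qed.

Lemma mk2_add (C : numClosedFieldType) (x y z w x' y' z' w' : C) :
  mk2 x y z w + mk2 x' y' z' w' = mk2 (x + x') (y + y') (z + z') (w + w').
Proof.
apply/matrixP => i j; rewrite !mxE.
by case: i => [[|[|i]]] Hi //=; case: j => [[|[|j]]] Hj.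
Qed.

Lemma mk2_opp (C : numClosedFieldType) (x y z w : C) :
  - mk2 x y z w = mk2 (-x) (-y) (-z) (-w).
Proof.
apply/matrixP => i j; rewrite !mxE.
by case: i => [[|[|i]]] Hi //=; case: j => [[|[|j]]] Hj.
Qed.

Lemma mk2_scale (C : numClosedFieldType) (k x y z w : C) :
  k *: mk2 x y z w = mk2 (k * x) (k * y) (k * z) (k * w).
Proof.
apply/matrixP => i j; rewrite !mxE.
by case: i => [[|[|i]]] Hi //=; case: j => [[|[|j]]] Hj.
Qed.

Lemma mk2_scalar (C : numClosedFieldType) (k : C) :
  k%:M = mk2 k 0 0 k.
Proof.
apply/matrixP => i j; rewrite !mxE.
by case: i => [[|[|i]]] Hi //=; case: j => [[|[|j]]] Hj.
Qed.

Lemma mk2_adj (C : numClosedFieldType) (x y z w : C) :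
  adjmx (mk2 x y z w) = mk2 x^* z^* y^* w^*.
Proof.
apply/matrixP => i j; rewrite /adjmx !mxE.
by case: i => [[|[|i]]] Hi //=; case: j => [[|[|j]]] Hj.
Qed.

Lemma mk2_tr (C : numClosedFieldType) (x y z w : C) :
  \tr (mk2 x y z w) = x + w.
Proof. by rewrite /mxtrace big_ord2 !mxE. Qed.

Lemma mk2_eq (C : numClosedFieldType) (x y z w x' y' z' w' : C) :
  mk2 x y z w = mk2 x' y' z' w' -> [/\ x = x', y = y', z = z' & w = w'].
Proof.
move=> H.
have h i j : mk2 x y z w i j = mk2 x' y' z' w' i j by rewrite H.
by move: (h 0 0) (h 0 1) (h 1 0) (h 1 1); rewrite !mxE /=.
Qed.
Lemma conjN (C : numClosedFieldType) (b : C) : (- b)^* = - b^*.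
Proof. exact: rmorphN. Qed.

Lemma adjmxM (C : numClosedFieldType) m n p (A : 'M[C]_(m, n)) (B : 'M[C]_(n, p)) :
  adjmx (A *m B) = adjmx B *m adjmx A.
Proof. by rewrite /adjmx map_mxM trmx_mul. Qed.

Lemma adjmxK (C : numClosedFieldType) m n (A : 'M[C]_(m, n)) : adjmx (adjmx A) = A.
Proof. by apply/matrixP => i j; rewrite /adjmx !mxE conjCK. Qed.

Lemma adjmxZ (C : numClosedFieldType) m n (k : C) (A : 'M[C]_(m, n)) :
  adjmx (k *: A) = k^* *: adjmx A.
Proof. by apply/matrixP => i j; rewrite /adjmx !mxE rmorphM. Qed.

Lemma adjmxD (C : numClosedFieldType) m n (A B : 'M[C]_(m, n)) :
  adjmx (A + B) = adjmx A + adjmx B.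
Proof. by apply/matrixP => i j; rewrite /adjmx !mxE rmorphD. Qed.

Lemma adj_quad_ge0 (C : numClosedFieldType) d (w : 'cV[C]_d) :
  0 <= (adjmx w *m w) 0 0.
Proof.
rewrite mxE; apply: sumr_ge0 => i _; rewrite /adjmx !mxE mulrC; exact: mul_conjC_ge0.
Qed.

Lemma psd_idem (C : numClosedFieldType) d (P : 'M[C]_d) :
  adjmx P = P -> P *m P = P -> psd P.
Proof.
move=> HP HPP; split=> // v.
rewrite -{1}HPP -{1}HP mulmxA -adjmxM -mulmxA; exact: adj_quad_ge0.
Qed.

Lemma psd0 (C : numClosedFieldType) d : psd (0 : 'M[C]_d).
Proof.
split; first by apply/matrixP => i j; rewrite /adjmx !mxE rmorph0.
by move=> v; rewrite mulmx0 mul0mx mxE.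
Qed.

Lemma psd_add (C : numClosedFieldType) d (X Y : 'M[C]_d) :
  psd X -> psd Y -> psd (X + Y).
Proof.
move=> [HX qX] [HY qY]; split; first by rewrite adjmxD HX HY.
by move=> v; rewrite mulmxDr mulmxDl mxE addr_ge0.
Qed.

Lemma psd_scale (C : numClosedFieldType) d (k : C) (X : 'M[C]_d) :
  0 <= k -> psd X -> psd (k *: X).
Proof.
move=> Hk [HX qX]; split; first by rewrite adjmxZ HX conj_Creal // ger0_real.
by move=> v; rewrite -scalemxAr -scalemxAl mxE mulr_ge0.
Qed.

Lemma psd_sum (C : numClosedFieldType) d (I : Type) (r : seq I) (P : pred I)
   (F : I -> 'M[C]_d) :
  (forall i, P i -> psd (F i)) -> psd (\sum_(i <- r | P i) F i).
Proof.
move=> H; elim/big_rec: _ => [|i x Pi Hx]; first exact: psd0.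
exact: psd_add (H _ Pi) Hx.
Qed.

Definition vec2 {C : numClosedFieldType} (x y : C) : 'cV[C]_2 :=
  \col_(i < 2) if (i == 0 :> nat) then x else y.

Lemma quad2 (C : numClosedFieldType) (X : 'M[C]_2) (x y : C) :
  (adjmx (vec2 x y) *m X *m vec2 x y) 0 0 =
  x^* * (X 0 0 * x + X 0 1 * y) + y^* * (X 1 0 * x + X 1 1 * y).
Proof.
rewrite !mxE !big_ord2 !mxE !big_ord2 /adjmx !mxE /=; ring.
Qed.

Lemma psd2 (C : numClosedFieldType) (X : 'M[C]_2) : psd X ->
  [/\ X 1 0 = (X 0 1)^*, 0 <= X 0 0, 0 <= X 1 1 &
      0 <= X 0 0 * X 1 1 - X 0 1 * (X 0 1)^*].
Proof.
move=> [HX qX].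
have h10 : X 1 0 = (X 0 1)^*.
  by have := congr1 (fun M : 'M[C]_2 => M 1 0) HX; rewrite /adjmx !mxE /= => H; by rewrite -H.
have a0 : 0 <= X 0 0.
  by have := qX (vec2 1 0); rewrite quad2 conjC1 conjC0 !(mul1r, mulr1, mulr0, mul0r, addr0, add0r).
have c0 : 0 <= X 1 1.
  by have := qX (vec2 0 1); rewrite quad2 conjC1 conjC0 !(mul1r, mulr1, mulr0, mul0r, addr0, add0r).
split => //.
have q2 x y : 0 <= x^* * (X 0 0 * x + X 0 1 * y) + y^* * ((X 0 1)^* * x + X 1 1 * y).
  by have := qX (vec2 x y); rewrite quad2 h10.
move: (X 0 0) (X 0 1) (X 1 1) a0 c0 q2 => a b c a0 c0 q2.
have ra : a^* = a by rewrite conj_Creal // ger0_real.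
have rc : c^* = c by rewrite conj_Creal // ger0_real.
have [az|anz] := eqVneq a 0.
  have [cz|cnz] := eqVneq c 0.
    have := q2 (- b) 1; rewrite az cz conjC1 conjN.
    move=> H; rewrite mul0r sub0r.
    have -> : - (b * b^*) = ((- b^* * (0 * - b + b * 1) + 1 * (b^* * - b + 0 * 1)))/2.
      by field.
    by apply: divr_ge0.
  have := q2 c (- b^*); rewrite rc conjN conjCK.
  have -> : c * (a * c + b * - b^*) + - b * (b^* * c + c * - b^*) = c * (a * c - b * b^*) by ring.
  by rewrite pmulr_rge0 // lt_def cnz.
have := q2 b (- a); rewrite conjN ra.
have -> : b^* * (a * b + b * - a) + - a * (b^* * b + c * - a) = a * (a * c - b * b^*) by ring.
by rewrite pmulr_rge0 // lt_def anz.
Qed.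

Lemma conjM (C : numClosedFieldType) (x y : C) : (x * y)^* = x^* * y^*.
Proof. exact: rmorphM. Qed.
Lemma conjD (C : numClosedFieldType) (x y : C) : (x + y)^* = x^* + y^*.
Proof. exact: rmorphD. Qed.
Lemma conjdiv (C : numClosedFieldType) (x y : C) : (x / y)^* = x^* / y^*.
Proof. exact: fmorph_div. Qed.

Definition rabc {C : numClosedFieldType} (a b c : C) : C :=
  sqrtC (((a - c) / 2) ^+ 2 + b * b^*).
Definition Pabc {C : numClosedFieldType} (a b c : C) : 'M[C]_2 :=
  let h := (a - c) / 2 in let r := rabc a b c in
  if r == 0 then 1%:M else
  mk2 ((h + r) / (2 * r)) (b / (2 * r)) (b^* / (2 * r)) ((- h + r) / (2 * r)).

Lemma decomp_abc (C : numClosedFieldType) (a b c : C) :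
  0 <= a -> 0 <= c -> 0 <= a * c - b * b^* ->
  let r := rabc a b c in let P := Pabc a b c in
  [/\ adjmx P = P, P *m P = P,
      mk2 a b b^* c = ((a + c) / 2 + r) *: P + ((a + c) / 2 - r) *: (1%:M - P),
      0 <= (a + c) / 2 - r & 0 <= (a + c) / 2 + r].
Proof.
move=> a0 c0 d0 r P.
rewrite /P /Pabc -/r.
set h := (a - c) / 2.
have hr : h \is Num.real.
  by apply: rpredM; [apply: rpredB; exact: ger0_real | by rewrite realV ger0_real // ler0n].
have ra : a^* = a by rewrite conj_Creal // ger0_real.
have rc : c^* = c by rewrite conj_Creal // ger0_real.
have D0 : 0 <= h ^+ 2 + b * b^* by rewrite addr_ge0 // -?realEsqr // mul_conjC_ge0.
have r0 : 0 <= r by rewrite /r /rabc sqrtC_ge0.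
have rsq : r ^+ 2 = h ^+ 2 + b * b^* by rewrite /r /rabc sqrtCK.
have rr : r^* = r by rewrite conj_Creal // ger0_real.
have t0 : 0 <= (a + c) / 2 by rewrite divr_ge0 // addr_ge0.
have be0 : 0 <= (a + c) / 2 - r.
  rewrite subr_ge0 -ler_sqr ?nnegrE // rsq -subr_ge0.
  by have -> : ((a + c) / 2) ^+ 2 - (h ^+ 2 + b * b^*) = a * c - b * b^* by rewrite /h; field; done.
have al0 : 0 <= (a + c) / 2 + r by rewrite addr_ge0.
have rh : h^* = h by rewrite conj_Creal.
have c2 : (2 : C)^* = 2 by rewrite rmorph_nat.
have [rz|rnz] := eqVneq r 0.
  have : h ^+ 2 + b * b^* == 0 by rewrite -rsq rz expr2 mulr0.
  rewrite paddr_eq0 -?realEsqr ?mul_conjC_ge0 // => /andP[].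
  rewrite sqrf_eq0 => hz; rewrite mulf_eq0 conjC_eq0 orbb => /eqP bz.
  have ac : c = a.
    apply/eqP; rewrite eq_sym -subr_eq0; move: hz; rewrite /h.
    by rewrite mulf_eq0 invr_eq0 pnatr_eq0 orbF.
  split => //.
  - by rewrite mk2_scalar mk2_adj conjC1 conjC0.
  - by rewrite mulmx1.
  - rewrite subrr scaler0 addr0 mk2_scalar mk2_scale rz bz ac conjC0; apply: mk2_inj; field; done.
have r2 : 2 * r != 0.
  apply: mulf_neq0 => //.
  by rewrite (pnatr_eq0 C 2).
split => //.
- rewrite mk2_adj; apply: mk2_inj; rewrite ?conjdiv ?conjM ?conjD ?conjN ?conjCK ?conjC1 ?rr ?rh ?c2 //.
- rewrite mk2_mul; apply: mk2_inj.
  + apply/eqP; rewrite -subr_eq0; apply/eqP.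
    have -> : (h + r) / (2 * r) * ((h + r) / (2 * r)) + b / (2 * r) * (b^* / (2 * r)) - (h + r) / (2 * r)
      = (h ^+ 2 + b * b^* - r ^+ 2) / (4 * r ^+ 2) by field.
    by rewrite rsq subrr mul0r.
  + by field.
  + by field.
  + apply/eqP; rewrite -subr_eq0; apply/eqP.
    have -> : b^* / (2 * r) * (b / (2 * r)) + (- h + r) / (2 * r) * ((- h + r) / (2 * r)) - (- h + r) / (2 * r)
      = (h ^+ 2 + b * b^* - r ^+ 2) / (4 * r ^+ 2) by field.
    by rewrite rsq subrr mul0r.
- rewrite mk2_scalar mk2_opp mk2_add !mk2_scale mk2_add; apply: mk2_inj; rewrite /h; field; done.
Qed.

Lemma conjnat (C : numClosedFieldType) (k : nat) : (k%:R : C)^* = k%:R.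
Proof. exact: rmorph_nat. Qed.

Definition Pm {C : numClosedFieldType} (X : 'M[C]_2) : 'M[C]_2 := Pabc (X 0 0) (X 0 1) (X 1 1).
Definition rm {C : numClosedFieldType} (X : 'M[C]_2) : C := rabc (X 0 0) (X 0 1) (X 1 1).

Lemma decomp (C : numClosedFieldType) (X : 'M[C]_2) : psd X ->
  [/\ adjmx (Pm X) = Pm X, Pm X *m Pm X = Pm X,
      X = (\tr X / 2 + rm X) *: Pm X + (\tr X / 2 - rm X) *: (1%:M - Pm X),
      0 <= \tr X / 2 - rm X & 0 <= \tr X / 2 + rm X].
Proof.
move=> HX; have [h10 a0 c0 d0] := psd2 _ _ HX.
have rX : X = mk2 (X 0 0) (X 0 1) (X 0 1)^* (X 1 1) by rewrite {1}[X]mk2E h10.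
have trX : \tr X = X 0 0 + X 1 1 by rewrite {1}rX mk2_tr.
have [H1 H2 H3 H4 H5] := decomp_abc _ _ _ _ a0 c0 d0.
by rewrite trX /Pm /rm; split => //; rewrite {1}rX.
Qed.

Lemma psd_tr_ge0 (C : numClosedFieldType) (X : 'M[C]_2) : psd X -> 0 <= \tr X.
Proof.
move=> HX; have [h10 a0 c0 d0] := psd2 _ _ HX.
by rewrite /mxtrace big_ord2 addr_ge0.
Qed.

Lemma psd_tr0 (C : numClosedFieldType) (X : 'M[C]_2) : psd X -> \tr X = 0 -> X = 0.
Proof.
move=> HX t0; have [H1 H2 H3 H4 H5] := decomp _ _ HX.
move: H4 H5; rewrite t0 mul0r sub0r add0r oppr_ge0 => H4 H5.
have r0 : rm X = 0 by apply/eqP; rewrite eq_le H4 H5.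
by move: H3; rewrite t0 r0 mul0r subr0 addr0 !scale0r addr0.
Qed.

Lemma idem_compl (C : numClosedFieldType) (P : 'M[C]_2) :
  adjmx P = P -> P *m P = P ->
  adjmx (1%:M - P) = 1%:M - P /\ (1%:M - P) *m (1%:M - P) = 1%:M - P.
Proof.
move=> h1 h2; split.
  apply/matrixP => i j; have := congr1 (fun M : 'M[C]_2 => M i j) h1.
  rewrite /adjmx !mxE => <-; rewrite conjD conjN conjnat.
  by rewrite eq_sym.
by rewrite mulmxBl mul1mx mulmxBr mulmx1 h2 subrr subr0.
Qed.

Lemma antipodalD (C : numClosedFieldType) d (X Y : 'M[C]_d) :
  antipodal (X + Y) = antipodal X + antipodal Y.
Proof. by rewrite /antipodal mxtraceD raddfD /= opprD addrACA. Qed.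

Lemma antipodalZ (C : numClosedFieldType) d (k : C) (X : 'M[C]_d) :
  antipodal (k *: X) = k *: antipodal X.
Proof. by rewrite /antipodal mxtraceZ scalerBr scale_scalar_mx. Qed.

Lemma antipodal_sum (C : numClosedFieldType) d (I : Type) (r : seq I) (P : pred I)
   (F : I -> 'M[C]_d) :
  antipodal (\sum_(i <- r | P i) F i) = \sum_(i <- r | P i) antipodal (F i).
Proof.
apply: (big_morph _ (@antipodalD C d)).
by rewrite /antipodal mxtrace0 subr0; apply/matrixP => i j; rewrite !mxE mul0rn.
Qed.

Lemma antipodalK (C : numClosedFieldType) (X : 'M[C]_2) : antipodal (antipodal X) = X.
Proof.
rewrite /antipodal mxtraceD (raddfN (@mxtrace C 2)) mxtrace_scalar.
have -> : \tr X *+ 2 - \tr X = \tr X by rewrite mulr2n addrK.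
by rewrite opprB addrC subrK.
Qed.

Lemma sum_delta (C : numClosedFieldType) d n (a : 'I_n) (F : 'I_n -> 'M[C]_d) :
  \sum_(i < n) (i == a)%:R *: F i = F a.
Proof.
rewrite (bigD1 a) //= eqxx scale1r big1 ?addr0 // => i /negPf ->.
by rewrite scale0r.
Qed.

Lemma sum_deltaC (C : numClosedFieldType) n (a : 'I_n) (F : 'I_n -> C) :
  \sum_(i < n) (i == a)%:R * F i = F a.
Proof.
rewrite (bigD1 a) //= eqxx mul1r big1 ?addr0 // => i /negPf ->.
by rewrite mul0r.
Qed.

Lemma sum_pairs (V : nmodType) n (F : 'I_n * 'I_n -> V) :
  \sum_(j < #|{: 'I_n * 'I_n}|) F (enum_val j) = \sum_(a < n) \sum_(b < n) F (a, b).
Proof.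
rewrite -(big_enum_val (A := predT)) /= pair_big /=.
by apply: eq_bigr => -[a b].
Qed.

Lemma antipodal0 (C : numClosedFieldType) d : antipodal (0 : 'M[C]_d) = 0.
Proof. by rewrite /antipodal mxtrace0 subr0; apply/matrixP => i j; rewrite !mxE mul0rn. Qed.

Lemma sum_delta1 (C : numClosedFieldType) n (a : 'I_n) :
  \sum_(i < n) (i == a)%:R = 1 :> C.
Proof.
rewrite (bigD1 a) //= eqxx big1 ?addr0 // => i /negPf ->. by [].
Qed.

Lemma term_id (C : numClosedFieldType) n (X : 'M[C]_2) (i a b : 'I_n) : psd X ->
  let s := \tr X in let al := s / 2 + rm X in let be := s / 2 - rm X in
  s / 2 *: ((if s == 0 then (i == a)%:R else
              ((i == a)%:R * al + (i == b)%:R * be) / s) *: Pm X +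
            (if s == 0 then (i == a)%:R else
              ((i == a)%:R * be + (i == b)%:R * al) / s) *: (1%:M - Pm X))
  = 2^-1 *: ((i == a)%:R *: X + (i == b)%:R *: antipodal X).
Proof.
move=> HX s al be.
have [H1 H2 H3 H4 H5] := decomp _ _ HX.
have [s0|sn0] := eqVneq s 0.
  have X0 : X = 0 by exact: psd_tr0.
  by rewrite s0 mul0r scale0r X0 antipodal0 !scaler0 addr0 scaler0.
rewrite /antipodal -/s -/al -/be.
move: H3; rewrite -/s -/al -/be => H3.
have hs : s = al + be by rewrite /al /be; field.
clearbody al be; move: (Pm X) H3 => P H3.
rewrite {1 2}H3 hs; apply/matrixP => u v; rewrite !mxE.
rewrite hs in sn0.
by field.
Qed.

Lemma mxtrace_sum (C : numClosedFieldType) d n (F : 'I_n -> 'M[C]_d) :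
  \sum_(i < n) \tr (F i) = \tr (\sum_(i < n) F i).
Proof. by rewrite raddf_sum. Qed.

Lemma jm_sim (C : numClosedFieldType) (n : nat) (A : 'I_n -> 'M[C]_2) :
  jointly_measurable A (fun i => antipodal (A i)) -> proj_simulable A.
Proof.
move=> [M [Mpsd [Msum [Mrow Mcol]]]].
pose m := #|{: 'I_n * 'I_n}|.
pose ea (j : 'I_m) := (enum_val j).1.
pose eb (j : 'I_m) := (enum_val j).2.
pose X j := M (ea j) (eb j).
pose s j := \tr (X j).
pose al j := s j / 2 + rm (X j).
pose be j := s j / 2 - rm (X j).
exists m, (fun _ => 2%N),
  (fun j i' => if i' == 0 :> nat then Pm (X j) else 1%:M - Pm (X j)),
  (fun j => s j / 2),
  (fun j i' i => if i' == 0 :> nat then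
      (if s j == 0 then (i == ea j)%:R else
        ((i == ea j)%:R * al j + (i == eb j)%:R * be j) / s j)
    else (if s j == 0 then (i == ea j)%:R else
        ((i == ea j)%:R * be j + (i == eb j)%:R * al j) / s j)).
have HX j : psd (X j) by exact: Mpsd.
split; [|split; [|split; [|split; [|split]]]].
- move=> j; have [H1 H2 H3 H4 H5] := decomp _ _ (HX j).
  have [c1 c2] := idem_compl _ _ H1 H2.
  split; [split|].
  + by move=> i'; case: ifP => _; apply: psd_idem.
  + by rewrite big_ord2 /= addrC subrK.
  + by move=> i'; case: ifP.
- by move=> j; rewrite divr_ge0 ?ler0n // psd_tr_ge0.
- rewrite (sum_pairs _ _ (fun x => \tr (M x.1 x.2) / 2)).
  under eq_bigr => a _ do rewrite -mulr_suml mxtrace_sum.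
  by rewrite -mulr_suml mxtrace_sum Msum mxtrace1 divff // (pnatr_eq0 C 2).
- move=> j i' i; have [H1 H2 H3 H4 H5] := decomp _ _ (HX j).
  have s0 : 0 <= s j by exact: psd_tr_ge0.
  by case: ifP => _; case: ifP => _; rewrite ?ler0n // divr_ge0 // addr_ge0 // mulr_ge0 // ler0n.
- move=> j i'; have [s0|sn0] := eqVneq (s j) 0.
    by case: (nat_of_ord i' == 0%N); rewrite sum_delta1.
  have hs : al j + be j = s j by rewrite /al /be; field.
  case: (nat_of_ord i' == 0%N); rewrite -mulr_suml big_split /= -!mulr_suml !sum_delta1 !mul1r.
    by rewrite hs divff.
  by rewrite addrC hs divff.
- move=> i.
  under eq_bigr => j _ do rewrite big_ord2 /= (term_id _ _ _ i (ea j) (eb j) (HX j)).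
  rewrite (sum_pairs _ _ (fun x => 2^-1 *: ((i == x.1)%:R *: M x.1 x.2 + (i == x.2)%:R *: antipodal (M x.1 x.2)))) /=.
  rewrite (eq_bigr (fun a => 2^-1 *: ((i == a)%:R *: \sum_(b < n) M a b +
       \sum_(b < n) (i == b)%:R *: antipodal (M a b)))); last first.
    by move=> a _; rewrite -scaler_sumr big_split /= -scaler_sumr.
  rewrite -scaler_sumr big_split /=.
  under eq_bigr => a _ do rewrite Mrow eq_sym.
  rewrite sum_delta exchange_big /=.
  under eq_bigr => b _ do rewrite -scaler_sumr -antipodal_sum Mcol antipodalK eq_sym.
  rewrite sum_delta -mulr2n -scaler_nat scalerA mulVf ?scale1r //.
  by rewrite (pnatr_eq0 C 2).
Qed.

Lemma mk2_0 (C : numClosedFieldType) : mk2 0 0 0 0 = 0 :> 'M[C]_2.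
Proof.
apply/matrixP => i j; rewrite !mxE.
by case: i => [[|[|i]]] Hi //=; case: j => [[|[|j]]] Hj.
Qed.

Lemma proj_trace (C : numClosedFieldType) (P : 'M[C]_2) :
  adjmx P = P -> P *m P = P -> psd ((\tr P - 1) *: P).
Proof.
move=> h1 h2; have HP := psd_idem _ _ _ h1 h2.
have [h10 _ _ _] := psd2 _ _ HP.
have rP : P = mk2 (P 0 0) (P 0 1) (P 0 1)^* (P 1 1) by rewrite {1}[P]mk2E h10.
move: h2 HP; rewrite rP mk2_mul mk2_tr => /mk2_eq [e1 e2 _ e4] HP.
move: (P 0 0) (P 0 1) (P 1 1) e1 e2 e4 HP => a b c e1 e2 e4 HP.
have [bz|bnz] := eqVneq b 0.
  move: e1 e4; rewrite bz conjC0 !mul0r ?addr0 ?add0r => e1 e4.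
  have aa : (a == 0) || (a == 1).
    have : a * (a - 1) == 0 by rewrite mulrBr mulr1 e1 subrr.
    by rewrite mulf_eq0 subr_eq0.
  have cc : (c == 0) || (c == 1).
    have : c * (c - 1) == 0 by rewrite mulrBr mulr1 e4 subrr.
    by rewrite mulf_eq0 subr_eq0.
  move: HP; rewrite bz conjC0.
  case/orP: aa => /eqP ->; case/orP: cc => /eqP -> HP.
  - by rewrite mk2_0 scaler0; exact: psd0.
  - by rewrite add0r subrr scale0r; exact: psd0.
  - by rewrite addr0 subrr scale0r; exact: psd0.
  - by apply: psd_scale => //; rewrite addrK ler01.
have ac : a + c = 1.
  apply/eqP; rewrite -subr_eq0; apply/eqP; apply: (mulfI bnz).
  by rewrite mulr0 mulrBr mulr1 mulrDr [b * a]mulrC e2 subrr.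
by rewrite ac subrr scale0r; exact: psd0.
Qed.

Definition MB {C : numClosedFieldType} {k} (B : 'I_k -> 'M[C]_2) (i' i'' : 'I_k) : 'M[C]_2 :=
  (\tr (B i'') - (i' == i'')%:R) *: B i'.

Lemma MB_psd (C : numClosedFieldType) k (B : 'I_k -> 'M[C]_2) i' i'' :
  is_projective_povm B -> psd (MB B i' i'').
Proof.
move=> [[Bpsd Bsum] Bidem]; rewrite /MB.
have [<-|ne] := eqVneq i' i''.
  apply: proj_trace => //; by case: (Bpsd i').
rewrite subr0; apply: psd_scale => //; exact: psd_tr_ge0.
Qed.

Lemma MB_row (C : numClosedFieldType) k (B : 'I_k -> 'M[C]_2) i' :
  is_projective_povm B -> \sum_(i'' < k) MB B i' i'' = B i'.
Proof.
move=> [[Bpsd Bsum] Bidem]; rewrite /MB -scaler_suml sumrB mxtrace_sum Bsum mxtrace1.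
by rewrite (eq_bigr (fun i'' => (i'' == i')%:R)) ?sum_delta1 => [|i _]; rewrite ?(eq_sym i') // -[2%:R]/(1 + 1) addrK scale1r.
Qed.

Lemma MB_col (C : numClosedFieldType) k (B : 'I_k -> 'M[C]_2) i'' :
  is_projective_povm B -> \sum_(i' < k) MB B i' i'' = antipodal (B i'').
Proof.
move=> [[Bpsd Bsum] Bidem]; rewrite /MB.
under eq_bigr => i' _ do rewrite scalerBl.
rewrite sumrB -scaler_sumr Bsum scalemx1 /antipodal; congr (_ - _).
rewrite (eq_bigr (fun i' => (i' == i'')%:R *: B i')) ?sum_delta //.
Qed.

Lemma sim_jm (C : numClosedFieldType) (n : nat) (A : 'I_n -> 'M[C]_2) :
  is_povm A -> proj_simulable A -> jointly_measurable A (fun i => antipodal (A i)).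
Proof.
move=> [_ Asum] [m [k [B [p [q [HB [p0 [psum [q0 [qsum HA]]]]]]]]]].
pose M a b := \sum_(j < m) p j *: \sum_(i' < k j) \sum_(i'' < k j)
                 (q j i' a * q j i'' b) *: MB (B j) i' i''.
have Mrow a : \sum_(b < n) M a b = A a.
  rewrite HA exchange_big; apply: eq_bigr => j _ /=; rewrite -scaler_sumr; congr (_ *: _).
  rewrite exchange_big; apply: eq_bigr => i' _ /=; rewrite exchange_big /=.
  under eq_bigr => i'' _ do rewrite -scaler_suml -mulr_sumr qsum mulr1.
  by rewrite -scaler_sumr MB_row.
have Mcol b : \sum_(a < n) M a b = antipodal (A b).
  rewrite HA antipodal_sum exchange_big; apply: eq_bigr => j _.
  rewrite antipodalZ -scaler_sumr antipodal_sum; congr (_ *: _).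
  rewrite exchange_big /=.
  under eq_bigr => i' _ do rewrite exchange_big /=.
  under eq_bigr => i' _ do under eq_bigr => i'' _ do rewrite -scaler_suml -mulr_suml qsum mul1r.
  rewrite exchange_big /=; apply: eq_bigr => i'' _.
  by rewrite -scaler_sumr antipodalZ MB_col.
exists M; split; [|split; [|split]] => //.
- move=> a b; apply: psd_sum => j _; apply: psd_scale => //.
  apply: psd_sum => i' _; apply: psd_sum => i'' _; apply: psd_scale.
    exact: mulr_ge0.
  exact: MB_psd.
- by under eq_bigr => a _ do rewrite Mrow.
Qed.

Theorem theorem1 (C : numClosedFieldType) (n : nat) (A : 'I_n -> 'M[C]_2) :
  is_povm A ->
  (proj_simulable A <-> jointly_measurable A (fun i => antipodal (A i))).
Proof.
move=> HA; split; first exact: sim_jm.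
exact: jm_sim.
Qed.
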